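(* Suppose the polymer model with edge weights $R^1,R^2,(Y^1,Y^2)$ possesses the down-right property. Then for all $(m,n)\in\mathbb{Z}_+^2$: (a) $\mathbb{E}[\log Z_{m,n}]=m\,\mathbb{E}[\log R^1]+n\,\mathbb{E}[\log R^2]$; (b) $\mathrm{Var}[\log Z_{m,n}]=-m\,\mathrm{Var}[\log R^1]+n\,\mathrm{Var}[\log R^2]+2\,\mathrm{Cov}(S_N,S_S)$; (c) $\mathrm{Var}[\log Z_{m,n}]=m\,\mathrm{Var}[\log R^1]-n\,\mathrm{Var}[\log R^2]+2\,\mathrm{Cov}(S_E,S_W)$, where \[ S_N=\log Z_{m,n}-\log Z_{0,n}=\sum_{i=1}^m\log R^1_{i,n},\quad S_S=\log Z_{m,0}=\sum_{i=1}^m\log R^1_{i,0}, \] \[ S_E=\log Z_{m,n}-\log Z_{m,0}=\sum_{j=1}^n\log R^2_{m,j},\quad S_W=\log Z_{0,n}=\sum_{j=1}^n\log R^2_{0,j}. \]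
   Context: Polymer model with edge weights $R^1,R^2,(Y^1,Y^2)$: the edges of $\mathbb{Z}_+^2$ carry positive random weights. For $z\in\mathbb{N}^2$, $Y^1_z$ is the weight of the horizontal edge $\{z-(1,0),z\}$ and $Y^2_z$ of the vertical edge $\{z-(0,1),z\}$; the pairs $(Y^1_z,Y^2_z)$ are i.i.d. with the law of $(Y^1,Y^2)$. For $i\in\mathbb{N}$ the edge $\{(i-1,0),(i,0)\}$ carries $R^1_{i,0}$, and for $j\in\mathbb{N}$ the edge $\{(0,j-1),(0,j)\}$ carries $R^2_{0,j}$; these are i.i.d. with laws of $R^1$, resp. $R^2$; the three collections are mutually independent. $Z_x$ is the sum over up-right paths from $(0,0)$ to $x$ of the product of the edge weights along the path, $Z_{0,0}=1$. With $\alpha_1=(1,0)$, $\alpha_2=(0,1)$, define $R^k_x:=Z_x/Z_{x-\alpha_k}$ for $k=1,2$ and all $x$ with $x-\alpha_k\in\mathbb{Z}_+^2$. A down-right path is a sequence $\pi=(\pi_k)_{k\in\mathbb{Z}}$ in $\mathbb{Z}_+^2$ with $\pi_{k+1}-\pi_k\in\{\alpha_1,-\alpha_2\}$. To the edge $\{\pi_{k-1},\pi_k\}$ associate $R^1_{\pi_k}$ if horizontal and $R^2_{\pi_{k-1}}$ if vertical. The model has the down-right property if for every down-right path $\pi$ the associated random variables are independent and each $R^1_{\pi_k}$, resp. $R^2_{\pi_k}$, in the collection is distributed as $R^1$, resp. $R^2$. *)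

(* Defs.v *)
From HB Require Import structures.
From mathcomp Require Import all_boot all_order all_algebra.
From mathcomp Require Import all_classical all_reals all_analysis.
Set Implicit Arguments. Unset Strict Implicit. Unset Printing Implicit Defensive.
Import Order.TTheory GRing.Theory Num.Theory.
Local Open Scope classical_set_scope.
Local Open Scope ring_scope.

Definition rv_events {d d'} {T : measurableType d} {T' : measurableType d'}
  (X : T -> T') : set (set T) := [set X @^-1` B | B in measurable].

Definition indep_family {d} {T : measurableType d} {R : realType}
  (P : probability T R) (I : Type) (E : I -> set (set T)) : Prop :=
  forall (n : nat) (f : 'I_n -> I) (A : 'I_n -> set T),
    injective f -> (forall k, E (f k) (A k)) ->
    P (\bigcap_k A k) = (\big[*%E/1%E]_(k < n) P (A k))%E.

Definition same_law {d d'} {T : measurableType d} {T' : measurableType d'}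
  {R : realType} (P : probability T R) (X Y : T -> T') : Prop :=
  forall B : set T', measurable B -> P (X @^-1` B) = P (Y @^-1` B).

Section polymer.
Context {d} {T : measurableType d} {R : realType}.
Variables (R1 R2 : nat -> T -> R) (Y1 Y2 : nat -> nat -> T -> R).
(* R1 i = R^1_{i,0} (i >= 1), R2 j = R^2_{0,j} (j >= 1),
   Y1 i j = Y^1_{(i,j)}, Y2 i j = Y^2_{(i,j)} (i, j >= 1). *)

(* weight of the horizontal edge {(a-1,b),(a,b)} *)
Definition hweight (a b : nat) : T -> R := if b == 0%N then R1 a else Y1 a b.
(* weight of the vertical edge {(a,b-1),(a,b)} *)
Definition vweight (a b : nat) : T -> R := if a == 0%N then R2 b else Y2 a b.

(* an up-right path from (0,0) is encoded by its sequence of steps,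
   true = vertical step (+alpha_2), false = horizontal step (+alpha_1) *)
Definition path_pos (N : nat) (s : N.-tuple bool) (k : nat) : nat * nat :=
  (count negb (take k s), count id (take k s)).

Definition step_weight (N : nat) (s : N.-tuple bool) (k : nat) : T -> R :=
  let p := path_pos s k.+1 in
  if nth false s k then vweight p.1 p.2 else hweight p.1 p.2.

Definition Zpf (m n : nat) : T -> R := fun w =>
  \sum_(s : (m + n).-tuple bool | count id s == n)
    \prod_(k < m + n) step_weight s k w.

Definition Rhat1 (x : nat * nat) : T -> R :=
  fun w => Zpf x.1 x.2 w / Zpf x.1.-1 x.2 w.
Definition Rhat2 (x : nat * nat) : T -> R :=
  fun w => Zpf x.1 x.2 w / Zpf x.1 x.2.-1 w.

Definition down_right_path (pi : int -> nat * nat) : Prop :=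
  forall k : int, pi (k + 1) = ((pi k).1.+1, (pi k).2)
               \/ ((pi (k + 1)).1 = (pi k).1 /\ (pi k).2 = (pi (k + 1)).2.+1).

Definition dr_horizontal (pi : int -> nat * nat) (k : int) : bool :=
  (pi k).2 == (pi (k - 1)).2.

Definition dr_var (pi : int -> nat * nat) (k : int) : T -> R :=
  if dr_horizontal pi k then Rhat1 (pi k) else Rhat2 (pi (k - 1)).

(* down-right property; the laws of R^1 and R^2 are those of R^1_{1,0}
   and R^2_{0,1} *)
Definition down_right_property (P : probability T R) : Prop :=
  forall pi, down_right_path pi ->
    indep_family P (fun k : int => rv_events (dr_var pi k)) /\
    (forall k : int, same_law P (dr_var pi k)
                       (if dr_horizontal pi k then R1 1%N else R2 1%N)).

Definition polymer_model (P : probability T R) : Prop :=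
  [/\ (forall i w, (0 < i)%N -> 0 < R1 i w),
      (forall j w, (0 < j)%N -> 0 < R2 j w),
      (forall i j w, (0 < i)%N -> (0 < j)%N -> 0 < Y1 i j w /\ 0 < Y2 i j w),
      [/\ (forall i, measurable_fun setT (R1 i)), (forall j, measurable_fun setT (R2 j)) &
          (forall i j, measurable_fun setT (Y1 i j) /\ measurable_fun setT (Y2 i j))] &
  [/\
      (forall i, (0 < i)%N -> same_law P (R1 i) (R1 1%N)),
      (forall j, (0 < j)%N -> same_law P (R2 j) (R2 1%N)),
      (forall i j, (0 < i)%N -> (0 < j)%N ->
          same_law P (fun w => (Y1 i j w, Y2 i j w)) (fun w => (Y1 1%N 1%N w, Y2 1%N 1%N w))) &
      indep_family P (fun x : (nat + nat) + (nat * nat) =>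
        match x with
        | inl (inl i) => rv_events (R1 i.+1)
        | inl (inr j) => rv_events (R2 j.+1)
        | inr (i, j) => rv_events (fun w => (Y1 i.+1 j.+1 w, Y2 i.+1 j.+1 w))
        end)]].

Definition lnZ (m n : nat) : T -> R := fun w => ln (Zpf m n w).

End polymer.

(* Main.v *)
Require Import Defs.
From HB Require Import structures.
From mathcomp Require Import all_boot all_order all_algebra.
From mathcomp Require Import all_classical all_reals all_analysis.
From mathcomp Require Import measurable_realfun.
From mathcomp Require Import ring lra zify.
Import Order.TTheory GRing.Theory Num.Theory.
Local Open Scope classical_set_scope.
Local Open Scope ring_scope.
Set Implicit Arguments. Unset Strict Implicit. Unset Printing Implicit Defensive.

Section transfer.
Context {d} {T : measurableType d} {R : realType} (P : probability T R).
Local Open Scope ereal_scope.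

Lemma law_int0 (X Y : T -> R) : measurable_fun setT X -> measurable_fun setT Y ->
  same_law P X Y -> forall h : R -> \bar R, measurable_fun [set: R] h -> (forall y, 0 <= h y) ->
  \int[P]_x h (X x) = \int[P]_x h (Y x).
Proof.
move=> mX mY XY h mh h0.
have := @ge0_integral_pushforward _ _ _ _ R X mX P setT h measurableT mh (fun y _ => h0 y).
have := @ge0_integral_pushforward _ _ _ _ R Y mY P setT h measurableT mh (fun y _ => h0 y).
rewrite !preimage_setT => <- <-.
apply: eq_measure_integral => A mA _.
exact: XY.
Qed.

Lemma law_expect (X Y : T -> R) : measurable_fun setT X -> measurable_fun setT Y ->
  same_law P X Y -> 'E_P[X] = 'E_P[Y].
Proof.
move=> mX mY XY; rewrite unlock integralE [in RHS]integralE.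
have mE : measurable_fun [set: R] (EFin : R -> \bar R) by apply/measurable_EFinP.
congr (_ - _).
- rewrite (eq_integral (fun x => EFin^\+ (X x))); last by move=> x _; rewrite !funeposE.
  rewrite [RHS](eq_integral (fun x => EFin^\+ (Y x))); last by move=> x _; rewrite !funeposE.
  exact: (law_int0 mX mY XY (h := (EFin)^\+) (measurable_funepos mE) (fun y => funepos_ge0 _ y)).
- rewrite (eq_integral (fun x => EFin^\- (X x))); last by move=> x _; rewrite !funenegE.
  rewrite [RHS](eq_integral (fun x => EFin^\- (Y x))); last by move=> x _; rewrite !funenegE.
  exact: (law_int0 mX mY XY (h := (EFin)^\-) (measurable_funeneg mE) (fun y => funeneg_ge0 _ y)).
Qed.

Lemma law_Lfun (X Y : T -> R) (p : R) : measurable_fun setT X -> measurable_fun setT Y ->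
  same_law P X Y -> Y \in Lfun P p%:E -> X \in Lfun P p%:E.
Proof.
move=> mX mY XY /andP[_]; rewrite !inE /finite_norm => Yf.
apply/andP; split; first by rewrite inE.
rewrite inE /finite_norm; move: Yf; rewrite unlock /=.
rewrite (@law_int0 X Y mX mY XY (fun y => `|y%:E| `^ p)) //.
apply: (@measurableT_comp _ _ _ _ _ _ (poweR ^~ p)); first exact: measurable_poweR.
apply: (@measurableT_comp _ _ _ _ _ _ abse) => //.
by move=> y; exact: poweR_ge0.
Qed.

Lemma same_law_comp (X Y : T -> R) (g : R -> R) : measurable_fun [set: R] g ->
  same_law P X Y -> same_law P (g \o X) (g \o Y).
Proof.
move=> mg XY B mB.
have mgB : measurable (g @^-1` B) by rewrite -(setTI (g @^-1` B)); exact: mg.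
exact: (XY _ mgB).
Qed.

Lemma law_var (X Y : T -> R) : measurable_fun setT X -> measurable_fun setT Y ->
  same_law P X Y -> 'V_P[X] = 'V_P[Y].
Proof.
move=> mX mY XY; rewrite /variance unlock (law_expect mX mY XY).
set c := fine _.
pose g := fun y : R => ((y - c) * (y - c))%R.
have mg : measurable_fun [set: R] g.
  by apply: measurable_funM; apply: measurable_funB.
have := law_expect (X := g \o X) (Y := g \o Y) (measurableT_comp mg mX)
  (measurableT_comp mg mY) (same_law_comp mg XY).
by rewrite unlock.
Qed.
End transfer.


Definition indep2 {d} {T : measurableType d} {R : realType} (P : probability T R)
  (X Y : T -> R) := forall A B : set R, measurable A -> measurable B ->
  P (X @^-1` A `&` Y @^-1` B) = (P (X @^-1` A) * P (Y @^-1` B))%E.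

Section indep.
Context {d} {T : measurableType d} {R : realType} (P : probability T R).
Variables (X Y : T -> R).
Hypotheses (mX : measurable_fun setT X) (mY : measurable_fun setT Y).
Definition pairXY := fun w => (X w, Y w).
Let mZ : measurable_fun setT pairXY. Proof. exact: measurable_fun_pair. Qed.
HB.instance Definition _ := isMeasurableFun.Build _ _ _ _ X mX.
HB.instance Definition _ := isMeasurableFun.Build _ _ _ _ Y mY.
HB.instance Definition _ := isMeasurableFun.Build _ _ _ _ pairXY mZ.
Local Notation mu := (distribution P X).
Local Notation nu := (distribution P Y).
Local Notation rho := (distribution P pairXY).
Local Open Scope ereal_scope.

Let f := fun z : R * R => (z.1 * z.2)%:E.
Let mf : measurable_fun setT f.
Proof. apply/measurable_EFinP; apply: measurable_funM; [exact: measurable_fst|exact: measurable_snd]. Qed.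
Let mE : measurable_fun [set: R] (EFin : R -> \bar R).
Proof. exact/measurable_EFinP. Qed.

Let int_dist (Z : {mfun T >-> R}) : (Z : T -> R) \in Lfun P 1 -> (distribution P Z).-integrable setT EFin /\
   \int[distribution P Z]_y y%:E = 'E_P[Z].
Proof.
move=> /Lfun1_integrable iZ; split; last first.
  by rewrite unlock integral_distribution.
apply/integrableP; split => //.
rewrite ge0_integral_distribution //.
- by move/integrableP: iZ => [].
- exact: measurableT_comp.
Qed.

Lemma indep_expectM : indep2 P X Y -> X \in Lfun P 2%:E -> Y \in Lfun P 2%:E ->
  'E_P[(X * Y)%R] = 'E_P[X] * 'E_P[Y].
Proof.
move=> iXY X2 Y2.
have Pfin : P setT \is a fin_num := fin_num_measure P _ measurableT.
have X1 := Lfun_subset12 Pfin X2.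
have Y1 := Lfun_subset12 Pfin Y2.
have XY1 := Lfun2_mul_Lfun1 X2 Y2.
have /Lfun1_integrable iP := XY1.
have rhoE : forall C, measurable C -> (mu \x nu) C = rho C.
  apply: product_measure_unique => A B mA mB.
  exact: iXY.
have E1 : 'E_P[(X * Y)%R] = \int[rho]_z f z.
  by rewrite unlock integral_distribution.
have imf : (mu \x nu).-integrable setT f.
  apply/integrableP; split => //.
  rewrite (eq_measure_integral rho); last by move=> A mA _; exact: rhoE.
  rewrite ge0_integral_distribution //.
  - by move/integrableP: iP => [].
  - exact: measurableT_comp.
rewrite E1 (eq_measure_integral (mu \x nu)); last by move=> A mA _; symmetry; exact: rhoE.
rewrite -(integral12_prod_meas1 imf).
have [inu nuE] := int_dist Y1.
have [imu muE] := int_dist X1.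
rewrite /fubini_F.
under eq_integral => x _ do rewrite /f /= (integralZl measurableT inu) nuE.
have fY : 'E_P[Y] \is a fin_num by exact: expectation_fin_num.
rewrite -(fineK fY) (integralZr measurableT imu) muE fineK //.
Qed.
End indep.

Section sums.
Context {d} {T : measurableType d} {R : realType} (P : probability T R).
Local Open Scope ereal_scope.

Lemma Lfun2_sum (X : nat -> T -> R) n : (forall i, X i \in Lfun P 2%:E) ->
  (\sum_(i < n) X i)%R \in Lfun P 2%:E.
Proof. by move=> HX; rewrite rpred_sum ?lee1n. Qed.

Lemma cov_sum_l (X : nat -> T -> R) (Z : T -> R) n : (forall i, X i \in Lfun P 2%:E) ->
  Z \in Lfun P 2%:E ->
  covariance P (\sum_(i < n) X i)%R Z = \sum_(i < n) covariance P (X i) Z.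
Proof.
move=> HX HZ; elim: n => [|n IH].
  by rewrite !big_ord0 -[0%R]/(cst 0%R : T -> R) covariance_cst_l.
rewrite !big_ord_recr /= covarianceDl ?IH ?Lfun2_sum //.
Qed.

Lemma cov_sum_r (X : nat -> T -> R) (Z : T -> R) n : (forall i, X i \in Lfun P 2%:E) ->
  Z \in Lfun P 2%:E ->
  covariance P Z (\sum_(i < n) X i)%R = \sum_(i < n) covariance P Z (X i).
Proof.
move=> HX HZ; rewrite covarianceC cov_sum_l //.
by apply: eq_bigr => i _; rewrite covarianceC.
Qed.

Lemma cov_sum_indep (X Y : nat -> T -> R) n m : (forall i, X i \in Lfun P 2%:E) ->
  (forall i, Y i \in Lfun P 2%:E) -> (forall i j, (i < n)%N -> (j < m)%N -> covariance P (X i) (Y j) = 0) ->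
  covariance P (\sum_(i < n) X i)%R (\sum_(j < m) Y j)%R = 0.
Proof.
move=> HX HY H0; rewrite cov_sum_l //; last exact: Lfun2_sum.
rewrite big1 // => i _; rewrite cov_sum_r // big1 // => j _; exact: H0.
Qed.

Lemma var_sum_indep (X : nat -> T -> R) n V : (forall i, X i \in Lfun P 2%:E) ->
  (forall i j, (i < n)%N -> (j < n)%N -> i != j -> covariance P (X i) (X j) = 0) ->
  (forall i, (i < n)%N -> 'V_P[X i] = V) -> V \is a fin_num ->
  'V_P[(\sum_(i < n) X i)%R] = n%:R%:E * V.
Proof.
move=> HX H0 HV Vf; rewrite /variance cov_sum_l //; last exact: Lfun2_sum.
transitivity (\sum_(i < n) V).
  apply: eq_bigr => i _; rewrite cov_sum_r // (bigD1 i) //= big1 ?adde0.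
    exact: HV.
  by move=> j ji; apply: H0 => //; rewrite eq_sym.
rewrite -(fineK Vf) -EFinM sumEFin; congr EFin.
by rewrite sumr_const card_ord mulr_natl.
Qed.

Lemma expect_sum (X : nat -> T -> R) n : (forall i, X i \in Lfun P 1) ->
  'E_P[(\sum_(i < n) X i)%R] = \sum_(i < n) 'E_P[X i].
Proof.
move=> HX; elim: n => [|n IH].
  by rewrite !big_ord0 -[0%R]/(cst 0%R : T -> R) expectation_cst.
rewrite !big_ord_recr /= expectationD ?IH //.
by apply: rpred_sum => i _.
Qed.
End sums.


Section comb.
Context {d} {T : measurableType d} {R : realType}.
Variables (R1 R2 : nat -> T -> R) (Y1 Y2 : nat -> nat -> T -> R).
Hypotheses (pR1 : forall i w, (0 < i)%N -> 0 < R1 i w)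
  (pR2 : forall j w, (0 < j)%N -> 0 < R2 j w)
  (pY : forall i j w, (0 < i)%N -> (0 < j)%N -> 0 < Y1 i j w /\ 0 < Y2 i j w).

Lemma step_weight_gt0 N (s : N.-tuple bool) k w : (k < N)%N ->
  0 < step_weight R1 R2 Y1 Y2 s k w.
Proof.
move=> kN; rewrite /step_weight /path_pos.
have sz : (k < size s)%N by rewrite size_tuple.
rewrite (take_nth false sz) -cats1 !count_cat /=.
case: (nth false s k) => /=; rewrite ?addn0 ?addn1.
- rewrite /vweight; case: eqP => [_|/eqP a0]; first exact: pR2.
  by have [] := @pY (count negb (take k s)) (count id (take k s)).+1 w (ltac:(by rewrite lt0n)) (ltn0Sn _).
- rewrite /hweight; case: eqP => [_|/eqP b0]; first exact: pR1.
  by have [] := @pY (count negb (take k s)).+1 (count id (take k s)) w (ltn0Sn _) (ltac:(by rewrite lt0n)).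
Qed.

Lemma Zpf_gt0 m n w : 0 < Zpf R1 R2 Y1 Y2 m n w.
Proof.
rewrite /Zpf.
pose s0 := cat_tuple (nseq_tuple m false) (nseq_tuple n true).
have Hs0 : count id s0 == n by rewrite /= count_cat !count_nseq /= mul0n mul1n.
rewrite (bigD1 s0) //=.
have h1 : 0 < \prod_(k < m + n) step_weight R1 R2 Y1 Y2 s0 k w.
  by apply: prodr_gt0 => k _; apply: step_weight_gt0.
have h2 : 0 <= \sum_(s : (m + n).-tuple bool | (count id s == n) && (s != s0))
    \prod_(k < m + n) step_weight R1 R2 Y1 Y2 s k w.
  apply: sumr_ge0 => s _; apply: prodr_ge0 => k _; apply: ltW.
  exact: step_weight_gt0.
lra.
Qed.

Lemma Zpf00 w : Zpf R1 R2 Y1 Y2 0 0 w = 1.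
Proof.
rewrite /Zpf (big_pred1 [tuple]) ?big_ord0 // => s.
by rewrite (tuple0 s).
Qed.

Lemma lnZ00 w : lnZ R1 R2 Y1 Y2 0 0 w = 0.
Proof. by rewrite /lnZ Zpf00 ln1. Qed.

Lemma ln_ratio (a b : R) : 0 < a -> 0 < b -> ln (a / b) = ln a - ln b.
Proof.
move=> a0 b0; rewrite lnM ?posrE ?invr_gt0 // lnV // posrE //.
Qed.

Lemma lnRhat1 i n w : ln (Rhat1 R1 R2 Y1 Y2 (i.+1, n) w) =
  lnZ R1 R2 Y1 Y2 i.+1 n w - lnZ R1 R2 Y1 Y2 i n w.
Proof. by rewrite /Rhat1 /lnZ /= ln_ratio // Zpf_gt0. Qed.

Lemma lnRhat2 m j w : ln (Rhat2 R1 R2 Y1 Y2 (m, j.+1) w) =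
  lnZ R1 R2 Y1 Y2 m j.+1 w - lnZ R1 R2 Y1 Y2 m j w.
Proof. by rewrite /Rhat2 /lnZ /= ln_ratio // Zpf_gt0. Qed.

Lemma tele1 m n w : lnZ R1 R2 Y1 Y2 m n w - lnZ R1 R2 Y1 Y2 0 n w =
  \sum_(i < m) ln (Rhat1 R1 R2 Y1 Y2 (i.+1, n) w).
Proof.
under eq_bigr => i _ do rewrite lnRhat1.
by rewrite -(big_mkord xpredT (fun i => lnZ R1 R2 Y1 Y2 i.+1 n w - lnZ R1 R2 Y1 Y2 i n w))
  telescope_sumr.
Qed.

Lemma tele2 m n w : lnZ R1 R2 Y1 Y2 m n w - lnZ R1 R2 Y1 Y2 m 0 w =
  \sum_(j < n) ln (Rhat2 R1 R2 Y1 Y2 (m, j.+1) w).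
Proof.
under eq_bigr => i _ do rewrite lnRhat2.
by rewrite -(big_mkord xpredT (fun j => lnZ R1 R2 Y1 Y2 m j.+1 w - lnZ R1 R2 Y1 Y2 m j w))
  telescope_sumr.
Qed.

Hypotheses (mR1 : forall i, measurable_fun setT (R1 i)) (mR2 : forall j, measurable_fun setT (R2 j))
  (mY : forall i j, measurable_fun setT (Y1 i j) /\ measurable_fun setT (Y2 i j)).

Lemma measurable_Zpf m n : measurable_fun setT (Zpf R1 R2 Y1 Y2 m n).
Proof.
rewrite /Zpf.
under eq_fun => w do rewrite big_mkcond.
apply: measurable_sum => s.
case: (count id s == n); last exact: measurable_cst.
apply: measurable_prod => k _.
rewrite /step_weight; case: nth; rewrite /vweight /hweight; case: eqP => _ //.
- by case: (mY (path_pos s k.+1).1 (path_pos s k.+1).2).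
- by case: (mY (path_pos s k.+1).1 (path_pos s k.+1).2).
Qed.

Lemma measurable_lnZ m n : measurable_fun setT (lnZ R1 R2 Y1 Y2 m n).
Proof. exact: measurableT_comp (@measurable_ln R) (measurable_Zpf m n). Qed.

Lemma Rhat1E x : Rhat1 R1 R2 Y1 Y2 x = fun w => expR (lnZ R1 R2 Y1 Y2 x.1 x.2 w - lnZ R1 R2 Y1 Y2 x.1.-1 x.2 w).
Proof.
apply/funext => w; rewrite /Rhat1 /lnZ expRB !lnK // posrE; exact: Zpf_gt0.
Qed.

Lemma Rhat2E x : Rhat2 R1 R2 Y1 Y2 x = fun w => expR (lnZ R1 R2 Y1 Y2 x.1 x.2 w - lnZ R1 R2 Y1 Y2 x.1 x.2.-1 w).
Proof.
apply/funext => w; rewrite /Rhat2 /lnZ expRB !lnK // posrE; exact: Zpf_gt0.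
Qed.

Lemma measurable_Rhat1 x : measurable_fun setT (Rhat1 R1 R2 Y1 Y2 x).
Proof.
rewrite Rhat1E; apply: measurableT_comp; first exact: measurable_expR.
by apply: measurable_funB; apply: measurable_lnZ.
Qed.

Lemma measurable_Rhat2 x : measurable_fun setT (Rhat2 R1 R2 Y1 Y2 x).
Proof.
rewrite Rhat2E; apply: measurableT_comp; first exact: measurable_expR.
by apply: measurable_funB; apply: measurable_lnZ.
Qed.

End comb.


Definition pi1 (m n : nat) (k : int) : nat * nat :=
  match k with
  | Posz k' => if (k' <= m)%N then (k', n) else if (k' <= m + n)%N then (m, m + n - k')%N else (k' - n, 0)%N
  | Negz k' => (0%N, (n + k'.+1)%N)
  end.

Lemma PoszS k : (Posz k + 1 = Posz k.+1)%R.
Proof. by rewrite -addn1 PoszD. Qed.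
Lemma PoszB1 k : (0 < k)%N -> (Posz k - 1 = Posz k.-1)%R.
Proof. by case: k => // k _; rewrite -PoszS addrK. Qed.
Lemma Negz0S : (Negz 0 + 1 = 0)%R.
Proof. by []. Qed.
Lemma NegzSS k : (Negz k.+1 + 1 = Negz k)%R.
Proof. rewrite !NegzE. lia. Qed.

Lemma pi1_path m n : down_right_path (pi1 m n).
Proof.
move=> [k|k].
  rewrite PoszS /pi1.
  (repeat case: ifP => ?). all: rewrite /=. all: try (by left; congr (_,_); lia). all: try (by right; split; lia).
case: k => [|k]; first by rewrite Negz0S /pi1 /=; right; split => //; lia.
rewrite NegzSS /pi1 /=; right; split => //; lia.
Qed.

Section drv.
Context {d} {T : measurableType d} {R : realType}.
Variables (R1 R2 : nat -> T -> R) (Y1 Y2 : nat -> nat -> T -> R).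
Notation dr_var := (dr_var R1 R2 Y1 Y2).
Notation Rhat1 := (Rhat1 R1 R2 Y1 Y2).
Notation Rhat2 := (Rhat2 R1 R2 Y1 Y2).

Lemma drA m n i : (0 < i <= m)%N ->
  dr_horizontal (pi1 m n) (Posz i) /\ dr_var (pi1 m n) (Posz i) = Rhat1 (i, n).
Proof.
case/andP=> i0 im; rewrite /dr_var /dr_horizontal PoszB1 // /pi1 im.
by rewrite (leq_trans (leq_pred i) im) eqxx.
Qed.

Lemma drB m n j : (0 < j <= n)%N ->
  ~~ dr_horizontal (pi1 m n) (Posz (m + n - j).+1) /\
  dr_var (pi1 m n) (Posz (m + n - j).+1) = Rhat2 (m, j).
Proof.
case/andP=> j0 jn; rewrite /dr_var /dr_horizontal PoszB1 // /pi1 /=.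
have -> : ((m + n - j).+1 <= m)%N = false by lia.
have -> : ((m + n - j).+1 <= m + n)%N by lia.
case: ifP => h /=.
  have e : (m + n - (m + n - j).+1 == n)%N = false by apply/eqP; lia.
  by rewrite e; split => //; congr Rhat2; congr (_, _); lia.
have -> : (m + n - j <= m + n)%N by lia.
have e : (m + n - (m + n - j).+1 == m + n - (m + n - j))%N = false by apply/eqP; lia.
by rewrite /= e; split => //; congr Rhat2; congr (_, _); lia.
Qed.

Lemma drC i : (0 < i)%N ->
  dr_horizontal (pi1 0 0) (Posz i) /\ dr_var (pi1 0 0) (Posz i) = Rhat1 (i, 0).
Proof.
move=> i0; rewrite /dr_var /dr_horizontal PoszB1 // /pi1 /=.
have -> : (i <= 0)%N = false by lia.
by case: ifP => _ /=; rewrite ?subn0 ?add0n ?sub0n; try case: ifP => _ /=.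
Qed.

Lemma drD j :
  ~~ dr_horizontal (pi1 0 0) (Negz j + 1) /\ dr_var (pi1 0 0) (Negz j + 1) = Rhat2 (0, j.+1).
Proof.
rewrite /dr_var /dr_horizontal addrK.
case: j => [|j]; first by rewrite Negz0S.
have e : (j.+1 == (0 + j.+2))%N = false by apply/eqP; lia.
by rewrite NegzSS /= e add0n.
Qed.
End drv.

Unset Implicit Arguments.
Set Strict Implicit.

Lemma indep_cov0 {d} {T : measurableType d} {R : realType} (P : probability T R) (X Y : T -> R) :
  measurable_fun setT X -> measurable_fun setT Y -> indep2 P X Y ->
  X \in Lfun P 2%:E -> Y \in Lfun P 2%:E -> covariance P X Y = 0%E.
Proof.
move=> mX mY iXY X2 Y2.
have Pfin : P setT \is a fin_num := fin_num_measure P _ measurableT.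
have X1 := Lfun_subset12 Pfin X2.
have Y1 := Lfun_subset12 Pfin Y2.
have XY1 := Lfun2_mul_Lfun1 X2 Y2.
rewrite covarianceE // indep_expectM // subee // fin_numM // expectation_fin_num //.
Qed.

Section main.
Context {d} {T : measurableType d} {R : realType} (P : probability T R).
Variables (R1 R2 : nat -> T -> R) (Y1 Y2 : nat -> nat -> T -> R).
Hypotheses (pR1 : forall i w, (0 < i)%N -> 0 < R1 i w)
  (pR2 : forall j w, (0 < j)%N -> 0 < R2 j w)
  (pY : forall i j w, (0 < i)%N -> (0 < j)%N -> 0 < Y1 i j w /\ 0 < Y2 i j w).
Hypotheses (mR1 : forall i, measurable_fun setT (R1 i)) (mR2 : forall j, measurable_fun setT (R2 j))
  (mY : forall i j, measurable_fun setT (Y1 i j) /\ measurable_fun setT (Y2 i j)).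
Hypothesis Hdr : down_right_property R1 R2 Y1 Y2 P.
Hypotheses (HL1 : (fun w => ln (R1 1%N w)) \in Lfun P 2%:E)
  (HL2 : (fun w => ln (R2 1%N w)) \in Lfun P 2%:E).
Notation dr_var := (dr_var R1 R2 Y1 Y2).

Lemma measurable_drvar pi k : measurable_fun setT (dr_var pi k).
Proof.
rewrite /dr_var; case: ifP => _.
- exact: measurable_Rhat1.
- exact: measurable_Rhat2.
Qed.

Lemma dr_indep pi (k1 k2 : int) : down_right_path pi -> k1 != k2 ->
  indep2 P (@ln R \o dr_var pi k1) (@ln R \o dr_var pi k2).
Proof.
move=> Hpi k12 A B mA mB.
have [Hind _] := Hdr _ Hpi.
pose f : 'I_2 -> int := fun i => if val i == 0%N then k1 else k2.
pose E : 'I_2 -> set T := fun i => if val i == 0%N then (@ln R \o dr_var pi k1) @^-1` A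
  else (@ln R \o dr_var pi k2) @^-1` B.
have finj : injective f.
  move=> [[|[|i]] Hi] [[|[|j]] Hj] //=; rewrite /f /= => e;
    first [by apply/val_inj | by move: k12; rewrite e eqxx].
have HE : forall k, rv_events (dr_var pi (f k)) (E k).
  move=> [[|[|i]] Hi] //=; rewrite /rv_events /E /f /=.
  - exists (@ln R @^-1` A) => //.
    by rewrite -(setTI (@ln R @^-1` A)); apply: measurable_ln.
  - exists (@ln R @^-1` B) => //.
    by rewrite -(setTI (@ln R @^-1` B)); apply: measurable_ln.
have := Hind 2 f E finj HE.
rewrite !big_ord_recr big_ord0 /= mul1e /E /=.
move=> <-; congr (P _).
apply/seteqP; split => w.
- move=> [HA HB] [[|[|i]] Hi] //= _.
- by move=> H; split; [exact: (H ord0 I) | exact: (H (lift ord0 ord0) I)].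
Qed.

Lemma dr_law pi k : down_right_path pi ->
  same_law P (dr_var pi k) (if dr_horizontal pi k then R1 1 else R2 1).
Proof. by move=> Hpi; have [_ H] := Hdr _ Hpi; exact: H. Qed.


Section family.
Variables (pi : int -> nat * nat) (Hpi : down_right_path pi) (kk : nat -> int) (N : nat) (hb : bool).
Hypotheses (kinj : forall i j, (i < N)%N -> (j < N)%N -> kk i = kk j -> i = j)
  (khor : forall i, (i < N)%N -> dr_horizontal pi (kk i) = hb).

Definition famG := if hb then R1 1 else R2 1.
Definition famF i := fun w => @ln R (dr_var pi (kk i) w).

Lemma mG : measurable_fun setT famG. Proof. by rewrite /famG; case: hb. Qed.
Lemma lnG2 : (fun w => @ln R (famG w)) \in Lfun P 2%:E. Proof. by rewrite /famG; case: hb. Qed.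
Lemma mlnG : measurable_fun setT (fun w => @ln R (famG w)).
Proof. exact: measurableT_comp (@measurable_ln R) mG. Qed.

Lemma fam_meas i : measurable_fun setT (famF i).
Proof. exact: measurableT_comp (@measurable_ln R) (measurable_drvar _ _). Qed.

Lemma fam_law i : (i < N)%N -> same_law P (famF i) (fun w => @ln R (famG w)).
Proof.
move=> iN; apply: (same_law_comp (g := @ln R) (@measurable_ln R)).
by rewrite /famG -(khor i iN); exact: dr_law.
Qed.

Lemma fam_L2 i : (i < N)%N -> famF i \in Lfun P 2%:E.
Proof. by move=> iN; apply: (law_Lfun (fam_meas i) mlnG (fam_law i iN)); exact: lnG2. Qed.

Local Open Scope ereal_scope.
Lemma fam_E i : (i < N)%N -> 'E_P[famF i] = 'E_P[fun w => @ln R (famG w)].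
Proof. by move=> iN; apply: (law_expect (fam_meas i) mlnG (fam_law i iN)). Qed.

Lemma fam_V i : (i < N)%N -> 'V_P[famF i] = 'V_P[fun w => @ln R (famG w)].
Proof. by move=> iN; apply: (law_var (fam_meas i) mlnG (fam_law i iN)). Qed.

Lemma fam_cov i j : (i < N)%N -> (j < N)%N -> i != j -> covariance P (famF i) (famF j) = 0%E.
Proof.
move=> iN jN ij; apply: indep_cov0; [exact: fam_meas|exact: fam_meas| |exact: fam_L2|exact: fam_L2].
apply: dr_indep => //; apply/eqP => e; move/eqP: ij; apply; exact: kinj.
Qed.

Definition famF' i := if (i < N)%N then famF i else cst 0%R.

Lemma famF'E : (\sum_(i < N) famF' i = \sum_(i < N) famF i)%R.
Proof. by apply: eq_bigr => i _; rewrite /famF' ltn_ord. Qed.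

Lemma famF'_L2 i : famF' i \in Lfun P 2%:E.
Proof. rewrite /famF'; case: ifP => iN; [exact: fam_L2|exact: Lfun_cst]. Qed.

Lemma fam_sumL2 : (\sum_(i < N) famF i)%R \in Lfun P 2%:E.
Proof. by rewrite -famF'E; apply: Lfun2_sum; exact: famF'_L2. Qed.

Lemma fam_sumE : 'E_P[(\sum_(i < N) famF i)%R] = (N%:R%:E * 'E_P[fun w => @ln R (famG w)])%E.
Proof.
have Pfin : P setT \is a fin_num := fin_num_measure P _ measurableT.
rewrite -famF'E expect_sum; last by move=> i; apply: (Lfun_subset12 Pfin); exact: famF'_L2.
have Ef : 'E_P[fun w => @ln R (famG w)] \is a fin_num.
  by apply: expectation_fin_num; apply: (Lfun_subset12 Pfin); exact: lnG2.
transitivity (\sum_(i < N) 'E_P[fun w => @ln R (famG w)])%E.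
  by apply: eq_bigr => i _; rewrite /famF' ltn_ord fam_E.
rewrite -(fineK Ef) -EFinM sumEFin; congr EFin.
by rewrite sumr_const card_ord mulr_natl.
Qed.

Lemma fam_sumV : 'V_P[(\sum_(i < N) famF i)%R] = (N%:R%:E * 'V_P[fun w => @ln R (famG w)])%E.
Proof.
rewrite -famF'E; apply: var_sum_indep.
- exact: famF'_L2.
- by move=> i j iN jN ij; rewrite /famF' iN jN; apply: fam_cov.
- by move=> i iN; rewrite /famF' iN fam_V.
- exact: variance_fin_num lnG2.
Qed.
End family.

Lemma cross_cov pi (Hpi : down_right_path pi) kk1 kk2 N1 N2 :
  (forall i j, (i < N1)%N -> (j < N2)%N -> kk1 i != kk2 j) ->
  (forall i, (i < N1)%N -> famF pi kk1 i \in Lfun P 2%:E) ->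
  (forall i, (i < N2)%N -> famF pi kk2 i \in Lfun P 2%:E) ->
  covariance P (\sum_(i < N1) famF pi kk1 i)%R (\sum_(j < N2) famF pi kk2 j)%R = 0%E.
Proof.
move=> k12 L1 L2.
pose F1 i := if (i < N1)%N then famF pi kk1 i else cst 0%R.
pose F2 i := if (i < N2)%N then famF pi kk2 i else cst 0%R.
have -> : (\sum_(i < N1) famF pi kk1 i = \sum_(i < N1) F1 i)%R.
  by apply: eq_bigr => i _; rewrite /F1 ltn_ord.
have -> : (\sum_(i < N2) famF pi kk2 i = \sum_(i < N2) F2 i)%R.
  by apply: eq_bigr => i _; rewrite /F2 ltn_ord.
apply: cov_sum_indep.
- by move=> i; rewrite /F1; case: ifP => iN; [exact: L1|exact: Lfun_cst].
- by move=> i; rewrite /F2; case: ifP => iN; [exact: L2|exact: Lfun_cst].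
- move=> i j iN jN; rewrite /F1 /F2 iN jN.
  apply: indep_cov0; [exact: fam_meas|exact: fam_meas| |exact: L1|exact: L2].
  by apply: dr_indep => //; exact: k12.
Qed.

End main.

Theorem lemma2p4 (d : measure_display) (T : measurableType d) (R : realType)
  (P : probability T R) (R1 R2 : nat -> T -> R) (Y1 Y2 : nat -> nat -> T -> R) :
  polymer_model R1 R2 Y1 Y2 P ->
  (fun w => ln (R1 1%N w)) \in Lfun P 2%:E ->
  (fun w => ln (R2 1%N w)) \in Lfun P 2%:E ->
  down_right_property R1 R2 Y1 Y2 P ->
  forall m n : nat,
    let logZ := lnZ R1 R2 Y1 Y2 in
    let SN := fun w => logZ m n w - logZ 0%N n w in
    let SS := logZ m 0%N in
    let SE := fun w => logZ m n w - logZ m 0%N w in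
    let SW := logZ 0%N n in
    [/\ ('E_P[logZ m n] = m%:R%:E * 'E_P[fun w => ln (R1 1%N w)]
                        + n%:R%:E * 'E_P[fun w => ln (R2 1%N w)])%E,
        (variance P (logZ m n) =
           - (m%:R%:E * variance P (fun w => ln (R1 1%N w)))
           + n%:R%:E * variance P (fun w => ln (R2 1%N w))
           + 2%:E * covariance P SN SS)%E &
        (variance P (logZ m n) =
           m%:R%:E * variance P (fun w => ln (R1 1%N w))
           - n%:R%:E * variance P (fun w => ln (R2 1%N w))
           + 2%:E * covariance P SE SW)%E].
Proof.
move=> [pR1 pR2 pY [mR1 mR2 mY] _] HL1 HL2 Hdr m n logZ SN SS SE SW.
have sE := @fam_sumE _ _ _ P R1 R2 Y1 Y2 pR1 pR2 pY mR1 mR2 mY Hdr HL1 HL2.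
have sV := @fam_sumV _ _ _ P R1 R2 Y1 Y2 pR1 pR2 pY mR1 mR2 mY Hdr HL1 HL2.
have sL := @fam_sumL2 _ _ _ P R1 R2 Y1 Y2 pR1 pR2 pY mR1 mR2 mY Hdr HL1 HL2.
have fL := @fam_L2 _ _ _ P R1 R2 Y1 Y2 pR1 pR2 pY mR1 mR2 mY Hdr HL1 HL2.
have cC := @cross_cov _ _ _ P R1 R2 Y1 Y2 pR1 pR2 pY mR1 mR2 mY Hdr.
pose kA := fun i : nat => Posz i.+1.
pose kB := fun j : nat => Posz (m + n - j.+1).+1.
pose kE := fun j : nat => (Negz j + 1)%R.
have HpA := pi1_path m n.
have Hp0 := pi1_path 0 0.
have hA : forall i, (i < m)%N -> dr_horizontal (pi1 m n) (kA i) = true.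
  move=> i im; have H : (0 < i.+1 <= m)%N by [].
  by have [-> _] := drA R1 R2 Y1 Y2 n H.
have hB : forall j, (j < n)%N -> dr_horizontal (pi1 m n) (kB j) = false.
  move=> j jn; have H : (0 < j.+1 <= n)%N by [].
  by have [/negbTE -> _] := drB R1 R2 Y1 Y2 m H.
have hC : forall i, (i < m)%N -> dr_horizontal (pi1 0 0) (kA i) = true.
  by move=> i im; have [-> _] := drC R1 R2 Y1 Y2 (ltn0Sn i).
have hE : forall j, (j < n)%N -> dr_horizontal (pi1 0 0) (kE j) = false.
  by move=> j jn; have [/negbTE -> _] := drD R1 R2 Y1 Y2 j.
have iA : forall i j, (i < m)%N -> (j < m)%N -> kA i = kA j -> i = j by move=> i j _ _ [].
have iB : forall i j, (i < n)%N -> (j < n)%N -> kB i = kB j -> i = j.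
  by move=> i j im jm [] => ?; lia.
have iE : forall i j, (i < n)%N -> (j < n)%N -> kE i = kE j -> i = j.
  by move=> i j _ _ /addIr [].
pose A := (\sum_(i < m) famF R1 R2 Y1 Y2 (pi1 m n) kA i)%R.
pose B := (\sum_(j < n) famF R1 R2 Y1 Y2 (pi1 m n) kB j)%R.
pose C := (\sum_(i < m) famF R1 R2 Y1 Y2 (pi1 0 0) kA i)%R.
pose E := (\sum_(j < n) famF R1 R2 Y1 Y2 (pi1 0 0) kE j)%R.
have SNA : SN = A.
  rewrite /SN /A fct_sumE; apply/funext => w; rewrite /logZ tele1 //.
  apply: eq_bigr => i _; rewrite /famF /kA.
  have H : (0 < i.+1 <= m)%N by rewrite /= ltn_ord.
  by have [_ ->] := drA R1 R2 Y1 Y2 n H.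
have SEB : SE = B.
  rewrite /SE /B fct_sumE; apply/funext => w; rewrite /logZ tele2 //.
  apply: eq_bigr => j _; rewrite /famF /kB.
  have H : (0 < j.+1 <= n)%N by rewrite /= ltn_ord.
  by have [_ ->] := drB R1 R2 Y1 Y2 m H.
have SSC : SS = C.
  rewrite /SS /C fct_sumE; apply/funext => w.
  rewrite /logZ; have -> : lnZ R1 R2 Y1 Y2 m 0 w = lnZ R1 R2 Y1 Y2 m 0 w - lnZ R1 R2 Y1 Y2 0 0 w.
    by rewrite lnZ00 subr0.
  rewrite tele1 //; apply: eq_bigr => i _; rewrite /famF /kA.
  by have [_ ->] := drC R1 R2 Y1 Y2 (ltn0Sn i).
have SWE : SW = E.
  rewrite /SW /E fct_sumE; apply/funext => w.
  rewrite /logZ; have -> : lnZ R1 R2 Y1 Y2 0 n w = lnZ R1 R2 Y1 Y2 0 n w - lnZ R1 R2 Y1 Y2 0 0 w.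
    by rewrite lnZ00 subr0.
  rewrite tele2 //; apply: eq_bigr => j _; rewrite /famF /kE.
  by have [_ ->] := drD R1 R2 Y1 Y2 j.
have LAE : logZ m n = (A \+ E)%R.
  by rewrite -SNA -SWE /SN /SW; apply/funext => w /=; rewrite subrK.
have LCB : logZ m n = (C \+ B)%R.
  by rewrite -SSC -SEB /SS /SE; apply/funext => w /=; rewrite addrC subrK.
have CE : C = ((A \+ E) \- B)%R.
  apply/funext => w; move: (congr1 (fun f => f w) LAE) (congr1 (fun f => f w) LCB) => /= h1 h2.
  lra.
have EE : E = ((C \+ B) \- A)%R.
  apply/funext => w; move: (congr1 (fun f => f w) LAE) (congr1 (fun f => f w) LCB) => /= h1 h2.
  lra.
have A2 : A \in Lfun P 2%:E := sL _ HpA _ _ _ hA.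
have B2 : B \in Lfun P 2%:E := sL _ HpA _ _ _ hB.
have C2 : C \in Lfun P 2%:E := sL _ Hp0 _ _ _ hC.
have E2 : E \in Lfun P 2%:E := sL _ Hp0 _ _ _ hE.
have VA : 'V_P[A] = (m%:R%:E * 'V_P[fun w => ln (R1 1%N w)])%E := sV _ HpA _ _ _ iA hA.
have VB : 'V_P[B] = (n%:R%:E * 'V_P[fun w => ln (R2 1%N w)])%E := sV _ HpA _ _ _ iB hB.
have VC : 'V_P[C] = (m%:R%:E * 'V_P[fun w => ln (R1 1%N w)])%E := sV _ Hp0 _ _ _ iA hC.
have VE : 'V_P[E] = (n%:R%:E * 'V_P[fun w => ln (R2 1%N w)])%E := sV _ Hp0 _ _ _ iE hE.
have EA : ('E_P[A] = m%:R%:E * 'E_P[fun w => ln (R1 1%N w)])%E := sE _ HpA _ _ _ hA.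
have EEn : ('E_P[E] = n%:R%:E * 'E_P[fun w => ln (R2 1%N w)])%E := sE _ Hp0 _ _ _ hE.
have cAB : covariance P A B = 0%E.
  apply: (cC _ HpA kA kB m n).
  - by move=> i j im jn; apply/eqP => -[]; lia.
  - exact: (fL _ HpA _ _ _ hA).
  - exact: (fL _ HpA _ _ _ hB).
have Pfin : P setT \is a fin_num := fin_num_measure P _ measurableT.
have cfin : forall X Z : T -> R, X \in Lfun P 2%:E -> Z \in Lfun P 2%:E ->
    covariance P X Z \is a fin_num.
  move=> X Z X2 Z2; have X1 := Lfun_subset12 Pfin X2; have Z1 := Lfun_subset12 Pfin Z2.
  have XZ := Lfun2_mul_Lfun1 X2 Z2; exact: covariance_fin_num.
have V1f := variance_fin_num HL1.
have V2f := variance_fin_num HL2.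
split.
- have A1 := Lfun_subset12 Pfin A2; have E1 := Lfun_subset12 Pfin E2.
  by rewrite LAE expectationD ?EA ?EEn.
- rewrite LAE SNA SSC CE varianceD // covarianceBr ?rpredD ?lee1n //.
  rewrite covarianceDr // -/(variance P A) VA VE cAB.
  have cf := cfin _ _ A2 E2.
  move: V1f V2f cf.
  set V1 := 'V_P[_]; set V2 := 'V_P[_]; set c := covariance P A E.
  move=> V1f V2f cf.
  rewrite -(fineK V1f) -(fineK V2f) -(fineK cf).
  rewrite sube0; repeat (rewrite -EFinM || rewrite -EFinD || rewrite -EFinN).
  by congr EFin; ring.
- rewrite LCB SEB SWE EE varianceD // covarianceBr ?rpredD ?lee1n //.
  rewrite covarianceDr // -/(variance P B) (covarianceC P B A) (covarianceC P B C) VC VB cAB.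
  have cf := cfin _ _ C2 B2.
  move: V1f V2f cf.
  set V1 := 'V_P[_]; set V2 := 'V_P[_]; set c := covariance P C B.
  move=> V1f V2f cf.
  rewrite -(fineK V1f) -(fineK V2f) -(fineK cf).
  rewrite sube0; repeat (rewrite -EFinM || rewrite -EFinD || rewrite -EFinN || rewrite -EFinB).
  by congr EFin; ring.
Qed.
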